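(* Fix an integer $M\ge 1$ and a real $\delta>0$. Then there is $T_0$ such that for every integer $T\ge T_0$, with $n=\left\lceil (1+\delta)\,\mathrm{e}\ln 2\,(M+1)^2\log_2 T\right\rceil$, there exists a code $(\mathbf{c}_1,\dots,\mathbf{c}_T)$ of $T$ binary words of length $n$ satisfying both of the following: (I) (identification) for every $t\in\{1,\dots,T\}$, every set $S\subseteq\{1,\dots,T\}\setminus\{t\}$ with $|S|\le M$, and every choice of shifts $s_u\in\{0,1,\dots,n-1\}$ ($u\in S$), the vector $\bigvee_{u\in S}\sigma_{s_u}(\mathbf{c}_u)$ does not cover $\mathbf{c}_t$; (S) (synchronization) for every $t\in\{1,\dots,T\}$, every $d\in\{1,\dots,n-1\}$, every set $S\subseteq\{1,\dots,T\}\setminus\{t\}$ with $|S|\le M-1$, and every choice of shifts $s_u\in\{0,1,\dots,n-1\}$ ($u\in S$), the vector $\sigma_d(\mathbf{c}_t)\vee\bigvee_{u\in S}\sigma_{s_u}(\mathbf{c}_u)$ does not cover $\mathbf{c}_t$. In other words, the minimum length $n_{\mathrm{asyn}}(T,M)$ of a code for asynchronous signature coding over the OR channel satisfies $n_{\mathrm{asyn}}(T,M)\lesssim \mathrm{e}\ln 2\,(M+1)^2\log_2 T$ as $T\to\infty$ with $M$ fixed.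
   Context: Binary vectors are elements of $\{0,1\}^n$; $\vee$ denotes the componentwise Boolean OR (an empty OR is the all-zero vector). A vector $\mathbf{y}=(y_1,\dots,y_n)$ covers $\mathbf{z}=(z_1,\dots,z_n)$ if $y_i\ge z_i$ for all $i$. For $\mathbf{c}\in\{0,1\}^n$ and an integer $s\in\{0,\dots,n-1\}$, the shifted vector $\sigma_s(\mathbf{c})\in\{0,1\}^n$ is defined by $(\sigma_s(\mathbf{c}))_i=c_{i-s}$ if $i>s$ and $(\sigma_s(\mathbf{c}))_i=0$ if $i\le s$. Logarithm $\log$ is base 2, $\ln$ is natural. *)

(* Defs.v *)
From Stdlib Require Import Reals List.
Open Scope R_scope.

(* A binary word of length n is a function word : nat -> bool, read at
   positions 1..n (values outside 1..n are irrelevant). *)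
Definition word := nat -> bool.

Definition shift (s : nat) (c : word) : word :=
  fun i => if Nat.ltb s i then c (i - s)%nat else false.

Definition bigor (l : list word) : word :=
  fun i => existsb (fun w => w i) l.

Definition covers (n : nat) (y z : word) : Prop :=
  forall i, (1 <= i <= n)%nat -> z i = true -> y i = true.

Definition por (y z : word) : word := fun i => orb (y i) (z i).

Definition log2 (x : R) : R := ln x / ln 2.

Definition is_ceil (x : R) (n : nat) : Prop := INR n - 1 < x <= INR n.

Definition valid_set (T t m : nat) (S : list nat) : Prop :=
  NoDup S /\ (length S <= m)%nat /\
  (forall u, In u S -> (1 <= u <= T)%nat /\ u <> t).

Definition shifted_or (c : nat -> word) (S : list nat) (s : nat -> nat) : word :=
  bigor (map (fun u => shift (s u) (c u)) S).

Definition async_code (n M T : nat) (c : nat -> word) : Prop :=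
  (forall t S (s : nat -> nat), (1 <= t <= T)%nat -> valid_set T t M S ->
     (forall u, In u S -> (s u < n)%nat) ->
     ~ covers n (shifted_or c S s) (c t)) /\
  (forall t d S (s : nat -> nat), (1 <= t <= T)%nat -> (1 <= d <= n - 1)%nat ->
     valid_set T t (M - 1) S ->
     (forall u, In u S -> (s u < n)%nat) ->
     ~ covers n (por (shift d (c t)) (shifted_or c S s)) (c t)).

(* Main.v *)
Require Import Defs.
From Stdlib Require ZArith.
From Stdlib Require Import Reals List Lra Lia Permutation Classical ClassicalEpsilon FunctionalExtensionality.
Open Scope R_scope.

Definition var := (nat * nat)%type.
Definition veq_dec : forall x y : var, {x = y} + {x <> y}.
Proof. decide equality; apply Nat.eq_dec. Defined.

Definition upd (f : var -> nat) (x : var) (a : nat) : var -> nat :=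
  fun y => if veq_dec y x then a else f y.

Fixpoint sumK (k : nat) (h : nat -> R) : R :=
  match k with O => 0 | S k' => sumK k' h + h k' end.

Definition avg (K : nat) (h : nat -> R) : R := sumK K h / INR K.

Fixpoint Ex (K : nat) (L : list var) (F : (var -> nat) -> R) (f : var -> nat) : R :=
  match L with
  | nil => F f
  | x :: L' => avg K (fun a => Ex K L' F (upd f x a))
  end.

Lemma sumK_ext k h h' : (forall a, (a < k)%nat -> h a = h' a) -> sumK k h = sumK k h'.
Proof. induction k; simpl; intros H; auto. rewrite IHk by (intros; apply H; lia). rewrite H by lia; auto. Qed.

Lemma sumK_le k h h' : (forall a, (a < k)%nat -> h a <= h' a) -> sumK k h <= sumK k h'.
Proof. induction k; simpl; intros H. lra. assert (h k <= h' k) by (apply H; lia).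
  assert (sumK k h <= sumK k h') by (apply IHk; intros; apply H; lia). lra. Qed.

Lemma sumK_plus k h h' : sumK k (fun a => h a + h' a) = sumK k h + sumK k h'.
Proof. induction k; simpl. lra. rewrite IHk; lra. Qed.

Lemma sumK_scale k c h : sumK k (fun a => c * h a) = c * sumK k h.
Proof. induction k; simpl. lra. rewrite IHk; lra. Qed.

Lemma sumK_const k c : sumK k (fun _ => c) = INR k * c.
Proof. induction k; simpl sumK. simpl; lra. rewrite IHk, S_INR; lra. Qed.

Lemma sumK_swap k1 k2 (h : nat -> nat -> R) :
  sumK k1 (fun a => sumK k2 (fun b => h a b)) = sumK k2 (fun b => sumK k1 (fun a => h a b)).
Proof. induction k1; simpl. induction k2; simpl; lra.
  rewrite IHk1. rewrite <- sumK_plus. reflexivity. Qed.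

Lemma sumK_nz k : sumK (S k) (fun a => if Nat.eqb a 0 then 0 else 1) = INR k.
Proof. induction k. simpl. lra. change (sumK (S (S k)) ?h) with (sumK (S k) h + h (S k)).
  rewrite IHk. simpl (Nat.eqb (S k) 0). rewrite (S_INR k). lra. Qed.

Lemma sumK_lt1 k h : sumK k h < INR k -> exists a, (a < k)%nat /\ h a < 1.
Proof. induction k; simpl sumK; intros H. simpl in H; lra.
  rewrite S_INR in H. destruct (Rlt_dec (h k) 1). exists k; split; [lia|auto].
  destruct IHk as [a [Ha Hb]]. lra. exists a; split; [lia|auto]. Qed.

Lemma avg_ext K h h' : (forall a, (a < K)%nat -> h a = h' a) -> avg K h = avg K h'.
Proof. intros H; unfold avg; rewrite (sumK_ext K h h' H); auto. Qed.

Lemma avg_le K h h' : (0 < K)%nat -> (forall a, (a < K)%nat -> h a <= h' a) -> avg K h <= avg K h'.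
Proof. intros HK H; unfold avg. apply Rmult_le_compat_r.
  apply Rlt_le, Rinv_0_lt_compat, lt_0_INR; auto. apply sumK_le; auto. Qed.

Lemma avg_const K c : (0 < K)%nat -> avg K (fun _ => c) = c.
Proof. intros HK; unfold avg; rewrite sumK_const. field. apply not_0_INR; lia. Qed.

Lemma avg_plus K h h' : avg K (fun a => h a + h' a) = avg K h + avg K h'.
Proof. unfold avg; rewrite sumK_plus; lra. Qed.

Lemma avg_scale K c h : avg K (fun a => c * h a) = c * avg K h.
Proof. unfold avg; rewrite sumK_scale; lra. Qed.

Lemma avg_swap K (h : nat -> nat -> R) :
  avg K (fun a => avg K (fun b => h a b)) = avg K (fun b => avg K (fun a => h a b)).
Proof. unfold avg. unfold Rdiv.
  rewrite (sumK_ext K (fun a => sumK K (fun b => h a b) * / INR K) (fun a => / INR K * sumK K (fun b => h a b))) by (intros; lra).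
  rewrite (sumK_ext K (fun b => sumK K (fun a => h a b) * / INR K) (fun b => / INR K * sumK K (fun a => h a b))) by (intros; lra).
  rewrite !sumK_scale, sumK_swap. reflexivity. Qed.

Lemma Ex_ext_local K L F G f :
  (forall g, (forall x, ~ In x L -> g x = f x) -> F g = G g) -> Ex K L F f = Ex K L G f.
Proof.
  revert f; induction L as [|y L IH]; simpl; intros f H.
  - apply H; auto.
  - apply avg_ext; intros a _. apply IH. intros g Hg. apply H.
    intros x Hx. rewrite Hg by tauto. unfold upd. destruct (veq_dec x y); [subst; tauto|auto].
Qed.

Lemma Ex_mono K L F G f : (0 < K)%nat -> (forall g, F g <= G g) -> Ex K L F f <= Ex K L G f.
Proof. intros HK H; revert f; induction L; simpl; intros f; auto. apply avg_le; auto. Qed.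

Lemma Ex_const K L c f : (0 < K)%nat -> Ex K L (fun _ => c) f = c.
Proof. intros HK; revert f; induction L; simpl; intros f; auto.
  rewrite (avg_ext K _ (fun _ => c)). apply avg_const; auto. intros; auto. Qed.

Lemma Ex_scale K L c F f : Ex K L (fun g => c * F g) f = c * Ex K L F f.
Proof. revert f; induction L as [|y L IH]; simpl; intros f; auto.
  rewrite (avg_ext K _ (fun a => c * Ex K L F (upd f y a))). apply avg_scale. intros; auto. Qed.

Lemma Ex_plus K L F G f : Ex K L (fun g => F g + G g) f = Ex K L F f + Ex K L G f.
Proof. revert f; induction L as [|y L IH]; simpl; intros f; auto.
  rewrite (avg_ext K _ (fun a => Ex K L F (upd f y a) + Ex K L G (upd f y a))). apply avg_plus. intros; auto. Qed.

Lemma Ex_app K L1 L2 F f : Ex K (L1 ++ L2) F f = Ex K L1 (Ex K L2 F) f.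
Proof. revert f; induction L1; simpl; intros f; auto. apply avg_ext; intros; auto. Qed.

Lemma upd_comm f x y a b : x <> y -> upd (upd f x a) y b = upd (upd f y b) x a.
Proof. intros H; apply functional_extensionality; intros z; unfold upd.
  destruct (veq_dec z y), (veq_dec z x); subst; auto; congruence. Qed.

Lemma upd_same f x a b : upd (upd f x a) x b = upd f x b.
Proof. apply functional_extensionality; intros z; unfold upd. destruct (veq_dec z x); auto. Qed.

Lemma Ex_perm K L L' F f : Permutation L L' -> Ex K L F f = Ex K L' F f.
Proof.
  intros HP; revert f; induction HP; simpl; intros f; auto.
  - apply avg_ext; intros; auto.
  - destruct (veq_dec x y). subst; reflexivity.
    rewrite avg_swap. apply avg_ext; intros a _. apply avg_ext; intros b _.
    rewrite upd_comm by auto. reflexivity.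
  - rewrite IHHP1; auto.
Qed.

Lemma Ex_lt1 K L F f : (0 < K)%nat -> Ex K L F f < 1 -> exists g, F g < 1.
Proof.
  intros HK; revert f; induction L as [|y L IH]; simpl; intros f H. eauto.
  unfold avg in H. assert (Hk : 0 < INR K) by (apply lt_0_INR; auto).
  assert (sumK K (fun a => Ex K L F (upd f y a)) < INR K).
  { apply (Rmult_lt_reg_r (/ INR K)). apply Rinv_0_lt_compat; auto.
    rewrite Rinv_r by lra. exact H. }
  destruct (sumK_lt1 _ _ H0) as [a [_ Ha]]. eapply IH; eauto.
Qed.

Fixpoint suml {A} (h : A -> R) (l : list A) : R :=
  match l with nil => 0 | x :: l' => h x + suml h l' end.

Lemma Ex_suml {A} K L (cs : list A) F f :
  Ex K L (fun g => suml (fun c => F c g) cs) f = suml (fun c => Ex K L (F c) f) cs.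
Proof. induction cs; simpl. revert f; induction L; simpl; intros; auto.
  rewrite (avg_ext K _ (fun _ => 0)). unfold avg; rewrite sumK_const; lra. intros; auto.
  rewrite Ex_plus, IHcs; auto. Qed.

Lemma suml_le {A} (h h' : A -> R) l : (forall x, In x l -> h x <= h' x) -> suml h l <= suml h' l.
Proof. induction l; simpl; intros H. lra. assert (h a <= h' a) by auto.
  assert (suml h l <= suml h' l) by auto. lra. Qed.

Lemma suml_const {A} c (l : list A) : suml (fun _ => c) l = INR (length l) * c.
Proof. induction l; simpl suml. simpl; lra. rewrite IHl. simpl length. rewrite S_INR; lra. Qed.

Lemma suml_in {A} (h : A -> R) l x : (forall y, In y l -> 0 <= h y) -> In x l -> h x <= suml h l.
Proof. induction l; simpl; intros H Hx. tauto. destruct Hx. subst.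
  assert (0 <= suml h l) . { clear IHl. induction l as [|z l IHl]; simpl. lra. assert (0 <= h z) by (apply H; simpl; tauto).
   assert (0 <= suml h l) by (apply IHl; intros; apply H; simpl in *; tauto). lra. }
  lra. assert (0 <= h a) by auto. assert (h x <= suml h l) by auto. lra. Qed.
Definition cd (g : var -> nat) : nat -> word := fun u j => Nat.eqb (g (u,j)) 0.
Definition bind (b : bool) : R := if b then 1 else 0.
Definition om (al : R) (b : bool) : R := if b then 1 else al.

Definition Ybig (g : var -> nat) (P : list (nat*nat)) : word :=
  bigor (map (fun pr => shift (snd pr) (cd g (fst pr))) P).
Definition Cond (t d : nat) (P : list (nat*nat)) (g : var -> nat) (i : nat) : bool :=
  implb (cd g t i) (shift d (cd g t) i || Ybig g P i).
Definition Ys (m : nat) (P : list (nat*nat)) : list var :=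
  map (fun pr => (fst pr, m - snd pr)%nat) (filter (fun pr => Nat.ltb (snd pr) m) P).
Definition Nm t m P : list var := (t, m) :: Ys m P.
Fixpoint Ns t P m : list var :=
  match m with O => nil | S m' => Ns t P m' ++ Nm t m P end.
Definition AllNZ (L : list var) (g : var -> nat) : bool :=
  forallb (fun z => negb (Nat.eqb (g z) 0)) L.

Lemma Ybig_Ys g P m : Ybig g P m = negb (AllNZ (Ys m P) g).
Proof. unfold Ybig, bigor, Ys, AllNZ. induction P as [|[u s] P IH]; simpl; auto.
  unfold shift at 1. simpl. destruct (Nat.ltb s m); simpl; rewrite IH; auto.
  unfold cd. destruct (Nat.eqb (g (u, m - s)%nat) 0); simpl; auto. Qed.

Lemma sumK_nz2 k u w : sumK (S k) (fun a => if Nat.eqb a 0 then u else w) = u + INR k * w.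
Proof. induction k. simpl. lra. change (sumK (S (S k)) ?h) with (sumK (S k) h + h (S k)).
  rewrite IHk. simpl (Nat.eqb (S k) 0). rewrite (S_INR k). lra. Qed.

Lemma AllNZ_ext L g h : (forall x, In x L -> g x = h x) -> AllNZ L g = AllNZ L h.
Proof. unfold AllNZ; induction L; simpl; intros H; auto. rewrite H by auto. rewrite IHL; auto. Qed.

Lemma Ex_AllNZ k L f : NoDup L ->
  Ex (S k) L (fun g => bind (AllNZ L g)) f = (INR k / INR (S k)) ^ length L.
Proof.
  revert f; induction L as [|y L IH]; intros f HN; cbn [Ex length]. reflexivity.
  inversion HN; subst.
  unfold avg. rewrite (sumK_ext (S k) _ (fun a => if Nat.eqb a 0 then 0 else (INR k / INR (S k)) ^ length L)).
  rewrite sumK_nz2, <- tech_pow_Rmult. field. apply not_0_INR; lia.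
  intros a _.
  rewrite (Ex_ext_local _ _ _ (fun g => (if Nat.eqb a 0 then 0 else 1) * bind (AllNZ L g))).
  rewrite Ex_scale, IH by auto. destruct (Nat.eqb a 0); lra.
  intros g Hg. unfold AllNZ at 1. simpl. rewrite Hg by auto. unfold upd.
  destruct (veq_dec y y); [|congruence]. destruct (Nat.eqb a 0); simpl; unfold bind; 
  fold (AllNZ L g); destruct (AllNZ L g); lra.
Qed.

Lemma Ys_t_notin t m P d : ~ In t (map fst P) -> ~ In (t, d) (Ys m P).
Proof. unfold Ys; intros H Hin. apply in_map_iff in Hin. destruct Hin as [[u s] [E Hin]].
  simpl in E. inversion E; subst. apply filter_In in Hin. apply H. apply in_map_iff. exists (t, s); split; tauto. Qed.

Lemma NoDup_Ys m P : NoDup (map fst P) -> NoDup (Ys m P).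
Proof. unfold Ys. induction P as [|[u s] P IH]; simpl; intros H. constructor.
  inversion H; subst. destruct (Nat.ltb s m); simpl; auto. constructor; auto.
  intros Hin. apply in_map_iff in Hin. destruct Hin as [[u' s'] [E Hin]]. simpl in E. inversion E; subst.
  apply filter_In in Hin. apply H2. apply in_map_iff. exists (u, s'); split; tauto. Qed.

Lemma length_Ys m P : (length (Ys m P) <= length P)%nat.
Proof. unfold Ys. rewrite length_map. induction P; simpl; auto. destruct (Nat.ltb _ _); simpl; lia. Qed.

Lemma bind_negb b : bind (negb b) = 1 - bind b.
Proof. destruct b; unfold bind; simpl; lra. Qed.

Lemma pow_le_mono_dec x n1 n2 : 0 <= x <= 1 -> (n1 <= n2)%nat -> x ^ n2 <= x ^ n1.
Proof. intros Hx Hn. induction Hn. lra. simpl. assert (0 <= x ^ m) by (apply pow_le; lra). nra. Qed.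

Lemma step_bound k t d P g m al lam q :
  NoDup (map fst P) -> ~ In t (map fst P) -> (1 <= d)%nat -> (1 <= m)%nat ->
  (0 < k)%nat -> q <= (INR k / INR (S k)) ^ length P -> 0 < al <= 1 ->
  (INR k * al + (1 - q)) / INR (S k) <= lam * al ->
  (shift d (cd g t) m = true -> (INR k * al + 1) / INR (S k) <= lam) ->
  Ex (S k) (Nm t m P) (fun h => bind (Cond t d P h m) * om al (cd h t m)) g
    <= lam * om al (shift d (cd g t) m).
Proof.
  intros HN Ht Hd Hm Hk Hq Hal HA HB.
  set (b := shift d (cd g t) m).
  assert (HK : 0 < INR (S k)) by (apply lt_0_INR; lia).
  assert (Hkp : 0 < INR k) by (apply lt_0_INR; lia).
  assert (Hx : 0 <= INR k / INR (S k) <= 1). { rewrite S_INR in *. split. apply Rlt_le, Rdiv_lt_0_compat; lra.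
    apply (Rmult_le_reg_r (INR k + 1)); [lra|]. unfold Rdiv; rewrite Rmult_assoc, Rinv_l by lra. lra. }
  assert (HqY : q <= (INR k / INR (S k)) ^ length (Ys m P)).
  { eapply Rle_trans; [exact Hq|]. apply pow_le_mono_dec; auto. apply length_Ys. }
  unfold Nm. simpl Ex.
  set (v0 := if b then 1 else 1 - q).
  apply Rle_trans with (avg (S k) (fun a => if Nat.eqb a 0 then v0 else al)).
  - apply avg_le; [lia|]. intros a _.
    rewrite (Ex_ext_local _ _ _ (fun h => bind (implb (Nat.eqb a 0) (b || negb (AllNZ (Ys m P) h))) * om al (Nat.eqb a 0))).
    + destruct (Nat.eqb a 0); simpl.
      * unfold v0. destruct b; simpl. rewrite Ex_const by lia. unfold bind, om; lra.
        unfold om. rewrite (Ex_ext_local _ _ _ (fun h => 1 - bind (AllNZ (Ys m P) h))).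
        rewrite (Ex_ext_local _ _ (fun h => 1 - bind (AllNZ (Ys m P) h)) (fun h => 1 + (-1) * bind (AllNZ (Ys m P) h))) by (intros; lra).
        rewrite Ex_plus, Ex_const, Ex_scale, Ex_AllNZ by (auto; try lia; apply NoDup_Ys; auto). lra.
        intros h _. rewrite bind_negb. lra.
      * rewrite Ex_const by lia. unfold bind, om; lra.
    + intros h Hh. unfold Cond. f_equal; [f_equal|].
      * unfold cd at 1. rewrite Hh by (apply Ys_t_notin; auto). unfold upd.
        destruct (veq_dec (t,m) (t,m)); [|congruence]. f_equal. f_equal.
        unfold b, shift. destruct (Nat.ltb d m) eqn:E; auto. unfold cd.
        apply Nat.ltb_lt in E. rewrite Hh by (apply Ys_t_notin; auto). unfold upd.
        destruct (veq_dec (t, m - d)%nat (t, m)) as [ee|]; auto. inversion ee; lia.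
        apply Ybig_Ys.
      * unfold om. unfold cd at 1. rewrite Hh by (apply Ys_t_notin; auto). unfold upd.
        destruct (veq_dec (t,m) (t,m)); [|congruence]. auto.
  - unfold avg. rewrite sumK_nz2. unfold v0. destruct b eqn:Eb; unfold om.
    + specialize (HB Eb). rewrite Rplus_comm. lra.
    + replace ((1 - q + INR k * al) / INR (S k)) with ((INR k * al + (1 - q)) / INR (S k)) by (f_equal; lra). lra.
Qed.
Definition bit t g k : bool := andb (Nat.leb 1 k) (cd g t k).
Fixpoint prodw (k : nat) (F : nat -> R) : R :=
  match k with O => 1 | S k' => prodw k' F * F k' end.
Definition Wp t al d' g m := prodw d' (fun j => om al (bit t g (m - j)%nat)).
Definition W t al d' g m := prodw (S d') (fun j => om al (bit t g (m - j)%nat)).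
Fixpoint prodI t d P g m : R :=
  match m with O => 1 | S m' => prodI t d P g m' * bind (Cond t d P g m) end.
Definition HH t d P al d' m g := prodI t d P g m * W t al d' g m.

Lemma prodw_shift k F : prodw (S k) F = F O * prodw k (fun j => F (S j)).
Proof. induction k; simpl. lra. simpl in IHk. rewrite IHk. lra. Qed.

Lemma prodw_ext k F G : (forall j, (j < k)%nat -> F j = G j) -> prodw k F = prodw k G.
Proof. induction k; simpl; intros H; auto. rewrite IHk, H by (auto; lia). auto. Qed.

Lemma prodw_nonneg k F : (forall j, 0 <= F j) -> 0 <= prodw k F.
Proof. induction k; simpl; intros H. lra. apply Rmult_le_pos; auto. Qed.

Lemma prodw_ge k F c : 0 <= c -> (forall j, c <= F j) -> c ^ k <= prodw k F.
Proof. induction k; simpl; intros Hc H. lra. rewrite Rmult_comm.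
  apply Rmult_le_compat; auto. apply pow_le; auto. Qed.

Lemma prodw_constc k c : prodw k (fun _ => c) = c ^ k.
Proof. induction k; simpl; auto. rewrite IHk; lra. Qed.

Lemma prodI_nonneg t d P g m : 0 <= prodI t d P g m.
Proof. induction m; simpl. lra. apply Rmult_le_pos; auto. unfold bind; destruct Cond; lra. Qed.

Lemma om_pos al b : 0 < al -> 0 < om al b.
Proof. unfold om; destruct b; lra. Qed.

Lemma In_Nm t i P x : In x (Nm t i P) <->
  x = (t, i) \/ exists u s, In (u, s) P /\ (s < i)%nat /\ x = (u, i - s)%nat.
Proof. unfold Nm, Ys. simpl. rewrite in_map_iff. split.
  - intros [H|[[u s] [E Hin]]]; [left; auto|right]. apply filter_In in Hin. destruct Hin as [Hin Hl].
    apply Nat.ltb_lt in Hl. exists u, s; simpl in *; subst; auto.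
  - intros [H|[u [s [Hin [Hl E]]]]]; [left; auto|right]. exists (u,s); split; simpl; auto.
    apply filter_In; split; auto. apply Nat.ltb_lt; auto. Qed.

Lemma In_Ns t P m x : In x (Ns t P m) <-> exists i, (1 <= i <= m)%nat /\ In x (Nm t i P).
Proof. induction m; simpl. split; [tauto|]. intros [i [Hi _]]; lia.
  rewrite in_app_iff, IHm. split.
  - intros [[i [Hi H]]|H]. exists i; split; auto; lia. exists (S m); split; auto; lia.
  - intros [i [Hi H]]. destruct (Nat.eq_dec i (S m)). subst; right; auto. left; exists i; split; auto; lia. Qed.

Lemma fst_uniq (P : list (nat*nat)) u a b : NoDup (map fst P) -> In (u,a) P -> In (u,b) P -> a = b.
Proof. induction P as [|[u' s] P IH]; simpl; intros HN Ha Hb. tauto. inversion HN; subst.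
  destruct Ha as [Ha|Ha], Hb as [Hb|Hb].
  - inversion Ha; inversion Hb; subst; auto.
  - inversion Ha; subst. exfalso; apply H1. apply in_map_iff. exists (u,b); auto.
  - inversion Hb; subst. exfalso; apply H1. apply in_map_iff. exists (u,a); auto.
  - auto. Qed.

Lemma notin_fst (P : list (nat*nat)) t s : ~ In t (map fst P) -> ~ In (t, s) P.
Proof. intros H Hin. apply H, in_map_iff. exists (t,s); auto. Qed.

Lemma Nm_disj t P i j x : NoDup (map fst P) -> ~ In t (map fst P) -> i <> j ->
  In x (Nm t i P) -> In x (Nm t j P) -> False.
Proof. intros HN Ht Hij H1 H2. apply In_Nm in H1, H2.
  destruct H1 as [E1|[u1 [s1 [I1 [L1 E1]]]]], H2 as [E2|[u2 [s2 [I2 [L2 E2]]]]]; subst.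
  - inversion E2; lia.
  - inversion E2; subst. eapply notin_fst; eauto.
  - inversion E2; subst. eapply notin_fst; eauto.
  - inversion E2; subst. assert (s1 = s2) by (eapply fst_uniq; eauto). subst. lia. Qed.

Lemma NoDup_Nm t i P : NoDup (map fst P) -> ~ In t (map fst P) -> NoDup (Nm t i P).
Proof. intros; unfold Nm; constructor. apply Ys_t_notin; auto. apply NoDup_Ys; auto. Qed.

Lemma NoDup_Ns t P m : NoDup (map fst P) -> ~ In t (map fst P) -> NoDup (Ns t P m).
Proof. intros HN Ht; induction m; simpl. constructor.
  apply NoDup_app; auto. apply NoDup_Nm; auto.
  intros x H1 H2. apply In_Ns in H1. destruct H1 as [i [Hi H1]]. eapply (Nm_disj t P i (S m)); eauto. lia. Qed.

Lemma agree_cd t P m g f i : (forall x, In x (Ns t P m) -> g x = f x) -> (1 <= i <= m)%nat ->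
  cd g t i = cd f t i.
Proof. intros H Hi. unfold cd. rewrite H; auto. apply In_Ns. exists i; split; auto. apply In_Nm; auto. Qed.

Lemma agree_bit t P m g f k : (forall x, In x (Ns t P m) -> g x = f x) -> (k <= m)%nat ->
  bit t g k = bit t f k.
Proof. intros H Hk. unfold bit. destruct (Nat.leb 1 k) eqn:E; simpl; auto.
  apply Nat.leb_le in E. apply (agree_cd t P m); auto. Qed.

Lemma agree_Cond t d P m g f i : (forall x, In x (Ns t P m) -> g x = f x) -> (1 <= i <= m)%nat ->
  Cond t d P g i = Cond t d P f i.
Proof. intros H Hi. unfold Cond. rewrite !Ybig_Ys. rewrite (agree_cd t P m g f i) by auto.
  rewrite (AllNZ_ext _ g f). f_equal. f_equal. unfold shift.
  destruct (Nat.ltb d i) eqn:E; auto. apply Nat.ltb_lt in E. apply (agree_cd t P m); auto; lia.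
  intros x Hx. apply H. apply In_Ns. exists i; split; auto. unfold Nm; simpl; auto. Qed.

Lemma agree_prodI t d P m g f : (forall x, In x (Ns t P m) -> g x = f x) -> prodI t d P g m = prodI t d P f m.
Proof. intros H. assert (forall m', (m' <= m)%nat -> prodI t d P g m' = prodI t d P f m').
  induction m'; simpl; intros; auto. rewrite IHm' by lia. rewrite (agree_Cond t d P m g f) by (auto; lia). auto.
  apply H0; auto. Qed.

Lemma agree_Wp t al d' P m g f : (forall x, In x (Ns t P m) -> g x = f x) -> Wp t al d' g m = Wp t al d' f m.
Proof. intros H. unfold Wp. apply prodw_ext. intros j _. rewrite (agree_bit t P m g f) by (auto; lia). auto. Qed.

Lemma shift_bit t g d' m : shift (S d') (cd g t) (S m) = bit t g (m - d')%nat.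
Proof. unfold shift, bit. destruct (Nat.ltb (S d') (S m)) eqn:E.
  apply Nat.ltb_lt in E. replace (Nat.leb 1 (m - d')) with true. simpl. f_equal.
  symmetry; apply Nat.leb_le; lia.
  apply Nat.ltb_ge in E. replace (m - d')%nat with O by lia. auto. Qed.

Lemma main_ind k t d' P al lam q n :
  let d := S d' in
  NoDup (map fst P) -> ~ In t (map fst P) ->
  (0 < k)%nat -> q <= (INR k / INR (S k)) ^ length P -> 0 < al <= 1 -> 0 <= lam ->
  (INR k * al + (1 - q)) / INR (S k) <= lam * al ->
  ((d < n)%nat -> (INR k * al + 1) / INR (S k) <= lam) ->
  forall m f, (m <= n)%nat -> Ex (S k) (Ns t P m) (HH t d P al d' m) f <= lam ^ m * al ^ (S d').
Proof.
  intros d HN Ht Hk Hq Hal Hlam HA HB. induction m; intros f Hm.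
  - simpl. unfold HH, W. simpl prodI. rewrite (prodw_ext _ _ (fun _ => al)).
    rewrite prodw_constc. simpl; lra. intros j _. simpl. unfold bit. simpl. reflexivity.
  - simpl Ns. rewrite Ex_app.
    apply Rle_trans with (Ex (S k) (Ns t P m) (fun g => lam * HH t d P al d' m g) f).
    + apply Ex_mono; [lia|]. intros g.
      rewrite (Ex_ext_local _ _ _ (fun h => (prodI t d P g m * Wp t al d' g m) *
          (bind (Cond t d P h (S m)) * om al (cd h t (S m))))).
      * rewrite Ex_scale. unfold HH, W at 1.
        assert (0 <= prodI t d P g m * Wp t al d' g m).
        { apply Rmult_le_pos. apply prodI_nonneg. apply prodw_nonneg. intros; apply Rlt_le, om_pos; lra. }
        eapply Rle_trans. apply Rmult_le_compat_l; auto.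
        apply (step_bound k t d P g (S m) al lam q); auto; try lia.
        intros Hs. apply HB. unfold d in Hs. rewrite shift_bit in Hs. unfold bit in Hs.
        apply andb_prop in Hs. destruct Hs as [Hs _]. apply Nat.leb_le in Hs. unfold d; lia.
        unfold d. rewrite shift_bit. simpl prodw. unfold Wp. lra.
      * intros h Hh. assert (Hag : forall x, In x (Ns t P m) -> h x = g x).
        { intros x Hx. apply Hh. intros Hx2. apply In_Ns in Hx. destruct Hx as [i [Hi Hx]].
          eapply (Nm_disj t P i (S m)); eauto. lia. }
        unfold HH, W. simpl prodI. rewrite prodw_shift. simpl (S m - 0)%nat.
        rewrite (agree_prodI t d P m h g) by auto.

        unfold bit at 1. simpl (Nat.leb 1 (S m)). simpl andb.
        change (prodw d' (fun j => om al (bit t h (S m - S j)%nat))) with (Wp t al d' h m).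
        rewrite (agree_Wp t al d' P m h g) by auto. ring.
    + rewrite Ex_scale. rewrite <- tech_pow_Rmult, Rmult_assoc. apply Rmult_le_compat_l; auto.
      apply IHm; lia.
Qed.
Definition ind (Q : Prop) : R := if excluded_middle_informative Q then 1 else 0.
Definition Lall (T n : nat) : list var := list_prod (seq 1 T) (seq 1 n).

Lemma NoDup_prod {A B} (l : list A) (l' : list B) : NoDup l -> NoDup l' -> NoDup (list_prod l l').
Proof. induction l as [|a l IH]; simpl; intros H1 H2. constructor. inversion H1; subst.
  apply NoDup_app. apply FinFun.Injective_map_NoDup; auto. intros x y E; inversion E; auto. auto.
  intros x Hx Hy. apply in_map_iff in Hx. destruct Hx as [b [E Hb]]. subst. apply in_prod_iff in Hy. tauto. Qed.

Lemma covers_prodI t d P g n m : covers n (por (shift d (cd g t)) (Ybig g P)) (cd g t) -> (m <= n)%nat ->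
  prodI t d P g m = 1.
Proof. intros Hc; induction m; simpl; intros Hm. auto. rewrite IHm by lia. unfold Cond.
  destruct (cd g t (S m)) eqn:E; simpl. assert (X := Hc (S m) ltac:(lia) E). unfold por in X. rewrite X.
  unfold bind; lra. unfold bind; lra. Qed.

Lemma cfg_bound k T n t d' P al lam q f :
  let d := S d' in
  (1 <= t <= T)%nat -> (d <= n)%nat ->
  (forall u s, In (u,s) P -> (1 <= u <= T)%nat /\ (s < n)%nat) ->
  NoDup (map fst P) -> ~ In t (map fst P) ->
  (0 < k)%nat -> q <= (INR k / INR (S k)) ^ length P -> 0 < al <= 1 -> 0 <= lam ->
  (INR k * al + (1 - q)) / INR (S k) <= lam * al ->
  ((d < n)%nat -> (INR k * al + 1) / INR (S k) <= lam) ->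
  Ex (S k) (Lall T n) (fun g => ind (covers n (por (shift d (cd g t)) (Ybig g P)) (cd g t))) f <= lam ^ n.
Proof.
  intros d Ht Hd HP HN Htn Hk Hq Hal Hlam HA HB.
  assert (Hap : 0 < al ^ S d') by (apply pow_lt; lra).
  apply Rle_trans with (Ex (S k) (Lall T n) (fun g => / al ^ S d' * HH t d P al d' n g) f).
  - apply Ex_mono; [lia|]. intros g. unfold ind. destruct (excluded_middle_informative _) as [Hc|Hc].
    + unfold HH. rewrite (covers_prodI t d P g n n) by auto.
      assert (al ^ S d' <= W t al d' g n). { apply prodw_ge. lra. intros j; unfold om; destruct bit; lra. }
      apply (Rmult_le_reg_l (al ^ S d')); auto. rewrite <- Rmult_assoc, Rinv_r by lra. lra.
    + apply Rmult_le_pos. apply Rlt_le, Rinv_0_lt_compat; auto. apply Rmult_le_pos. apply prodI_nonneg.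
      apply prodw_nonneg. intros; apply Rlt_le, om_pos; lra.
  - rewrite Ex_scale.
    set (Rest := filter (fun x => if in_dec veq_dec x (Ns t P n) then false else true) (Lall T n)).
    assert (HND : NoDup (Lall T n)) by (apply NoDup_prod; apply seq_NoDup).
    assert (Hsub : forall x, In x (Ns t P n) -> In x (Lall T n)).
    { intros x Hx. apply In_Ns in Hx. destruct Hx as [i [Hi Hx]]. apply In_Nm in Hx.
      unfold Lall. destruct Hx as [E|[u [s [Hin [Hl E]]]]]; subst; apply in_prod_iff; rewrite !in_seq.
      lia. destruct (HP u s Hin). lia. }
    assert (Hperm : Permutation (Lall T n) (Rest ++ Ns t P n)).
    { apply NoDup_Permutation; auto. apply NoDup_app. apply NoDup_filter; auto. apply NoDup_Ns; auto.
      intros x H1 H2. unfold Rest in H1. apply filter_In in H1. destruct (in_dec veq_dec x (Ns t P n)); try tauto.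
      destruct H1; discriminate.
      intros x. rewrite in_app_iff. unfold Rest. rewrite filter_In. split.
      intros H. destruct (in_dec veq_dec x (Ns t P n)); auto.
      intros [[H1 _]|H]; auto. }
    rewrite (Ex_perm _ _ _ _ _ Hperm), Ex_app.
    apply Rle_trans with (/ al ^ S d' * Ex (S k) Rest (fun _ => lam ^ n * al ^ S d') f).
    apply Rmult_le_compat_l. apply Rlt_le, Rinv_0_lt_compat; auto.
    apply Ex_mono; [lia|]. intros g. apply (main_ind k t d' P al lam q n); auto.
    rewrite Ex_const by lia. right. field. lra.
Qed.
Fixpoint lists_exact {A} (j : nat) (l : list A) : list (list A) :=
  match j with O => nil :: nil | S j' => flat_map (fun a => map (cons a) (lists_exact j' l)) l end.
Fixpoint lists_upto {A} (j : nat) (l : list A) : list (list A) :=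
  match j with O => nil :: nil | S j' => lists_upto j' l ++ lists_exact j l end.

Lemma length_flat_map_le {A B} (f : A -> list B) l c :
  (forall x, In x l -> (length (f x) <= c)%nat) -> (length (flat_map f l) <= length l * c)%nat.
Proof. induction l; simpl; intros H. lia. rewrite length_app. assert (length (f a) <= c)%nat by auto.
  assert (length (flat_map f l) <= length l * c)%nat by auto. lia. Qed.

Lemma length_lists_exact {A} j (l : list A) : (length (lists_exact j l) <= length l ^ j)%nat.
Proof. induction j; simpl. lia. eapply Nat.le_trans. apply (length_flat_map_le _ _ (length l ^ j)).
  intros; rewrite length_map; auto. lia. Qed.

Lemma length_lists_upto {A} j (l : list A) : (1 <= length l)%nat -> (length (lists_upto j l) <= S j * length l ^ j)%nat.
Proof. intros H. induction j; simpl. lia. rewrite length_app.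
  assert (length (lists_exact (S j) l) <= length l ^ S j)%nat by apply length_lists_exact.
  assert (length l ^ j <= length l ^ S j)%nat. { simpl. nia. }
  simpl in *. nia. Qed.

Lemma in_lists_exact {A} j (l : list A) (x : list A) : length x = j -> (forall a, In a x -> In a l) -> In x (lists_exact j l).
Proof. revert x; induction j; intros x Hx Hin; simpl. destruct x; simpl in *; auto; discriminate.
  destruct x as [|a x]; simpl in Hx. discriminate. apply in_flat_map. exists a; split. apply Hin; simpl; auto.
  apply in_map. apply IHj; auto. intros; apply Hin; simpl; auto. Qed.

Lemma in_lists_upto {A} j (l : list A) (x : list A) : (length x <= j)%nat -> (forall a, In a x -> In a l) -> In x (lists_upto j l).
Proof. induction j; intros Hx Hin; simpl. destruct x; simpl in *; auto; lia.
  apply in_app_iff. destruct (Nat.eq_dec (length x) (S j)). right; apply (in_lists_exact (S j)); auto.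
  left; apply IHj; auto; lia. Qed.

Definition cfg := (nat * nat * list (nat * nat))%type.

Definition validc (M T n : nat) (c : cfg) : Prop :=
  match c with (t, d, P) =>
    (1 <= t <= T)%nat /\ (1 <= d <= n)%nat /\
    (forall u s, In (u,s) P -> (1 <= u <= T)%nat /\ (s < n)%nat) /\
    NoDup (map fst P) /\ ~ In t (map fst P) /\
    (length P <= (if Nat.ltb d n then M - 1 else M))%nat
  end.

Definition Badc (M T n : nat) (c : cfg) (g : var -> nat) : Prop :=
  validc M T n c /\
  match c with (t, d, P) => covers n (por (shift d (cd g t)) (Ybig g P)) (cd g t) end.

Definition cfgs (M T n : nat) : list cfg :=
  flat_map (fun t => flat_map (fun d => map (fun P => (t, d, P)) (lists_upto M (list_prod (seq 1 T) (seq 0 n))))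
    (seq 1 n)) (seq 1 T).

Lemma length_cfgs M T n : (1 <= T)%nat -> (1 <= n)%nat ->
  (length (cfgs M T n) <= T * (n * (S M * (T * n) ^ M)))%nat.
Proof. intros HT Hn. unfold cfgs. eapply Nat.le_trans. apply (length_flat_map_le _ _ (n * (S M * (T * n) ^ M))).
  intros t _. eapply Nat.le_trans. apply (length_flat_map_le _ _ (S M * (T * n) ^ M)).
  intros d _. rewrite length_map. pose proof (length_lists_upto M (list_prod (seq 1 T) (seq 0 n))) as X.
  rewrite length_prod, !length_seq in X. apply X. nia.
  rewrite length_seq; lia. rewrite length_seq; lia. Qed.

Lemma map_fst_pairs (S : list nat) (s : nat -> nat) : map fst (map (fun u => (u, s u)) S) = S.
Proof. induction S; simpl; f_equal; auto. Qed.

Lemma Ybig_shifted g S s : Ybig g (map (fun u => (u, s u)) S) = shifted_or (cd g) S s.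
Proof. unfold Ybig, shifted_or. rewrite map_map. reflexivity. Qed.

Lemma in_pairs (S : list nat) (s : nat -> nat) u v : In (u, v) (map (fun u => (u, s u)) S) -> In u S /\ v = s u.
Proof. intros H; apply in_map_iff in H. destruct H as [w [E H]]. inversion E; subst; auto. Qed.

Lemma valid_pairs M T n t d S s : (1 <= t <= T)%nat -> (1 <= d <= n)%nat -> valid_set T t (if Nat.ltb d n then M - 1 else M) S ->
  (forall u, In u S -> (s u < n)%nat) -> validc M T n (t, d, map (fun u => (u, s u)) S).
Proof. intros Ht Hd [HND [HL HS]] Hs. unfold validc. split; [lia|]. split; [lia|]. split.
  intros uu v Hin. apply in_pairs in Hin. destruct Hin as [Hu E]; subst. destruct (HS uu Hu). split; [lia|auto].
  split. rewrite map_fst_pairs; auto. split. rewrite map_fst_pairs. intros Hin. destruct (HS t Hin); auto.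
  rewrite length_map. auto. Qed.

Lemma in_cfgs M T n t d S s : (1 <= t <= T)%nat -> (1 <= d <= n)%nat -> (length S <= M)%nat ->
  (forall u, In u S -> (1 <= u <= T)%nat) -> (forall u, In u S -> (s u < n)%nat) ->
  In (t, d, map (fun u => (u, s u)) S) (cfgs M T n).
Proof. intros Ht Hd HL HS Hs. unfold cfgs. apply in_flat_map. exists t; split. apply in_seq; lia.
  apply in_flat_map. exists d; split. apply in_seq; lia. apply in_map.
  apply in_lists_upto. rewrite length_map; auto. intros [u v] Hin. apply in_pairs in Hin.
  destruct Hin as [Hu E]; subst. apply in_prod_iff; rewrite !in_seq. specialize (HS u Hu). specialize (Hs u Hu). lia. Qed.

Lemma no_bad_async M T n g : (1 <= n)%nat ->
  (forall c, In c (cfgs M T n) -> ~ Badc M T n c g) -> async_code n M T (cd g).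
Proof.
  intros Hn Hnone. split.
  - intros t S s Ht HV Hs Hcov.
    apply (Hnone (t, n, map (fun u => (u, s u)) S)).
    + destruct HV as [HND [HL HS]]. apply in_cfgs; auto; try lia. intros u Hu; destruct (HS u Hu); auto.
    + split. apply valid_pairs; auto; try lia. rewrite Nat.ltb_irrefl; auto.
      rewrite Ybig_shifted. intros i Hi Hc. unfold por. rewrite (Hcov i Hi Hc). apply Bool.orb_true_r.
  - intros t d S s Ht Hd HV Hs Hcov.
    apply (Hnone (t, d, map (fun u => (u, s u)) S)).
    + destruct HV as [HND [HL HS]]. apply in_cfgs; auto; try lia. intros u Hu; destruct (HS u Hu); auto.
    + split. apply valid_pairs; auto; try lia. replace (Nat.ltb d n) with true. auto. symmetry; apply Nat.ltb_lt; lia.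
      rewrite Ybig_shifted. exact Hcov.
Qed.
Definition rr (M : nat) : R := (INR M / INR (S M)) ^ M / INR (S M).

Lemma param_sync p x q lam : 0 < p -> 0 < x -> x + p = 1 -> 0 < q <= 1 -> lam = 1 - p * x * q ->
  let al := (lam - p) / x in 0 < al <= 1 /\ x * al + p * (1 - q) <= lam * al /\ x * al + p <= lam.
Proof. intros Hp Hx Hs Hq Hl al.
  assert (Hpxq : 0 < p * x * q) by (apply Rmult_lt_0_compat; [apply Rmult_lt_0_compat|]; lra).
  assert (Hpx : p * x * q <= p * x) by (assert (0 < p * x) by (apply Rmult_lt_0_compat; lra); nra).
  assert (Hxa : x * al = lam - p) by (unfold al; field; lra).
  assert (Hlp : p < lam). { subst lam. assert (p * x < x) by nra. nra. }
  split; [|split].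
  - split. unfold al; apply Rdiv_lt_0_compat; lra.
    apply (Rmult_le_reg_l x); auto. rewrite Hxa. lra.
  - rewrite Hxa. apply (Rmult_le_reg_l x); auto.
    replace (x * (lam * al)) with (lam * (x * al)) by ring. rewrite Hxa.
    assert (lam * (p * x * q) <= p * x * q) by (subst lam; nra). subst lam. nra.
  - lra.
Qed.

Lemma cfg_Ex M T n c f : (1 <= M)%nat ->
  Ex (S M) (Lall T n) (fun g => ind (Badc M T n c g)) f <= (1 - rr M) ^ n.
Proof.
  intros HM. set (x := INR M / INR (S M)). set (p := / INR (S M)).
  assert (HSM : INR (S M) = INR M + 1) by apply S_INR.
  assert (HMp : 1 <= INR M) by (apply (le_INR 1); auto).
  assert (Hp : 0 < p) by (unfold p; apply Rinv_0_lt_compat; lra).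
  assert (Hx : 0 < x) by (unfold x; apply Rdiv_lt_0_compat; lra).
  assert (Hxp : x + p = 1) by (unfold x, p; rewrite HSM; field; lra).
  assert (Hxl : x <= 1) by lra.
  assert (Hr2 : rr M = p * x ^ M) by (unfold rr, p; fold x; unfold Rdiv; ring).
  assert (Hr : rr M = p * x * x ^ (M - 1)).
  { rewrite Hr2. replace M with (S (M - 1)) at 1 by lia. rewrite <- tech_pow_Rmult. ring. }
  assert (HxM : 0 < x ^ M) by (apply pow_lt; auto).
  assert (HxM1 : 0 < x ^ (M - 1)) by (apply pow_lt; auto).
  assert (HxM1' : x ^ M <= 1) by (apply (pow_le_mono_dec x 0 M); lia || lra).
  assert (HxM2 : x ^ (M - 1) <= 1) by (apply (pow_le_mono_dec x 0 (M - 1)); lia || lra).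
  assert (Hlam0 : 0 <= 1 - rr M). { rewrite Hr2. assert (p <= 1) by lra. nra. }
  assert (Hpow0 : 0 <= (1 - rr M) ^ n) by (apply pow_le; auto).
  destruct c as [[t d] P].
  destruct (classic (validc M T n (t, d, P))) as [HV|HV].
  2:{ rewrite (Ex_ext_local _ _ _ (fun _ => 0)). rewrite Ex_const by lia. auto.
      intros g _. unfold ind. destruct (excluded_middle_informative _) as [[H _]|]; tauto. }
  assert (HV' := HV). destruct HV' as [Ht [Hd [HP [HN [Htn HL]]]]].
  apply Rle_trans with (Ex (S M) (Lall T n) (fun g => ind (covers n (por (shift d (cd g t)) (Ybig g P)) (cd g t))) f).
  { apply Ex_mono; [lia|]. intros g. unfold ind at 1. destruct (excluded_middle_informative _) as [[_ H]|H].
    unfold ind; destruct (excluded_middle_informative _); tauto || lra.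
    unfold ind; destruct (excluded_middle_informative _); lra. }
  destruct d as [|d']. lia.
  destruct (Nat.ltb (S d') n) eqn:Edn.
  - apply Nat.ltb_lt in Edn.
    destruct (param_sync p x (x ^ (M - 1)) (1 - rr M)) as [Hal [HA HB]]; auto; try lra.
    apply (cfg_bound M T n t d' P ((1 - rr M - p) / x) (1 - rr M) (x ^ (M - 1)) f); auto; try lia.
    + fold x. apply pow_le_mono_dec; [lra|lia].
    + replace ((INR M * ((1 - rr M - p) / x) + (1 - x ^ (M - 1))) / INR (S M))
        with (x * ((1 - rr M - p) / x) + p * (1 - x ^ (M - 1))) by (unfold x, p; field; lra). auto.
    + intros _. replace ((INR M * ((1 - rr M - p) / x) + 1) / INR (S M))
        with (x * ((1 - rr M - p) / x) + p) by (unfold x, p; field; lra). auto.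
  - apply Nat.ltb_ge in Edn.
    apply (cfg_bound M T n t d' P 1 (1 - rr M) (x ^ M) f); auto; try lia; try lra.
    + fold x. apply pow_le_mono_dec; [lra|lia].
    + replace ((INR M * 1 + (1 - x ^ M)) / INR (S M)) with (x + p * (1 - x ^ M)) by (unfold x, p; field; lra).
      rewrite Hr2. lra.
Qed.

Lemma exists_code M T n : (1 <= M)%nat -> (1 <= T)%nat -> (1 <= n)%nat ->
  INR (T * (n * (S M * (T * n) ^ M))) * (1 - rr M) ^ n < 1 ->
  exists c, async_code n M T c.
Proof.
  intros HM HT Hn Hb.
  assert (Hlam : 0 <= (1 - rr M) ^ n).
  { apply pow_le. unfold rr. assert (HSM : INR (S M) = INR M + 1) by apply S_INR.
    assert (HMp : 1 <= INR M) by (apply (le_INR 1); auto).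
    assert (0 <= INR M / INR (S M) <= 1). { rewrite HSM. split. apply Rlt_le, Rdiv_lt_0_compat; lra.
      apply (Rmult_le_reg_r (INR M + 1)); [lra|]. unfold Rdiv; rewrite Rmult_assoc, Rinv_l by lra. lra. }
    assert ((INR M / INR (S M)) ^ M <= 1) by (apply (pow_le_mono_dec _ 0 M); lia || lra).
    assert (0 <= (INR M / INR (S M)) ^ M) by (apply pow_le; lra).
    set (y := (INR M / INR (S M)) ^ M) in *. unfold Rdiv.
    assert (y * / INR (S M) <= y * 1). { apply Rmult_le_compat_l; [lra|]. rewrite <- Rinv_1.
      apply Rinv_le_contravar; lra. } lra. }
  assert (HE : Ex (S M) (Lall T n) (fun g => ind (~ async_code n M T (cd g))) (fun _ : var => O) < 1).
  { apply Rle_lt_trans with (Ex (S M) (Lall T n) (fun g => suml (fun c => ind (Badc M T n c g)) (cfgs M T n)) (fun _ : var => O)).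
    - apply Ex_mono; [lia|]. intros g.
      destruct (classic (exists c, In c (cfgs M T n) /\ Badc M T n c g)) as [[c [Hc Hb']]|Hno].
      + apply Rle_trans with (ind (Badc M T n c g)).
        unfold ind. destruct (excluded_middle_informative (Badc M T n c g)); [|tauto].
        destruct (excluded_middle_informative _); lra.
        apply (suml_in (fun c => ind (Badc M T n c g))); auto.
        intros y _; unfold ind; destruct (excluded_middle_informative _); lra.
      + assert (async_code n M T (cd g)). { apply no_bad_async; auto. intros c Hc Hbad. apply Hno; eauto. }
        unfold ind at 1. destruct (excluded_middle_informative _); [tauto|].
        apply Rle_trans with (suml (fun _ : cfg => 0) (cfgs M T n)). rewrite suml_const; lra.
        apply suml_le. intros y _; unfold ind; destruct (excluded_middle_informative _); lra.
    - rewrite Ex_suml. eapply Rle_lt_trans; [|exact Hb].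
      apply Rle_trans with (suml (fun _ : cfg => (1 - rr M) ^ n) (cfgs M T n)).
      apply suml_le. intros c _. apply cfg_Ex; auto.
      rewrite suml_const. apply Rmult_le_compat_r; auto. apply le_INR. apply length_cfgs; auto. }
  destruct (Ex_lt1 (S M) _ _ _ ltac:(lia) HE) as [g Hg].
  exists (cd g). unfold ind in Hg. destruct (excluded_middle_informative (~ async_code n M T (cd g))) as [H|H]; [lra|]. apply NNPP; auto.
Qed.
Lemma exp_ge1 x : 1 + x <= exp x.
Proof. destruct (Req_dec x 0). subst; rewrite exp_0; lra. left; apply exp_ineq1; auto. Qed.

Lemma exp_pow a k : exp a ^ k = exp (INR k * a).
Proof. induction k; simpl pow. simpl; rewrite Rmult_0_l, exp_0; auto.
  rewrite IHk, <- exp_plus, S_INR. f_equal; ring. Qed.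

Lemma ln_le' a b : 0 < a -> a <= b -> ln a <= ln b.
Proof. intros Ha Hab. destruct Hab. left; apply ln_increasing; auto. subst; lra. Qed.

Lemma ln_le_sub1 z : 0 < z -> ln z <= z - 1.
Proof. intros Hz. rewrite <- (ln_exp (z - 1)). apply ln_le'; auto. pose proof (exp_ge1 (z - 1)); lra. Qed.

Lemma rr_lower M : (1 <= M)%nat -> exp (-1) / (INR M + 1) <= rr M.
Proof. intros HM. unfold rr. rewrite S_INR. set (m := INR M).
  assert (Hm : 1 <= m) by (apply (le_INR 1); auto).
  unfold Rdiv. apply Rmult_le_compat_r. apply Rlt_le, Rinv_0_lt_compat; lra.
  assert (exp (- (1 / m)) <= m * / (m + 1)).
  { rewrite exp_Ropp. replace (m * / (m + 1)) with (/ ((m + 1) / m)) by (field; lra).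
    apply Rinv_le_contravar. apply Rdiv_lt_0_compat; lra.
    pose proof (exp_ge1 (1 / m)). replace ((m + 1) / m) with (1 + 1 / m) by (field; lra). lra. }
  replace (exp (-1)) with (exp (- (1 / m)) ^ M). apply pow_incr. split; auto. left; apply exp_pos.
  rewrite exp_pow. f_equal. fold m. field. lra.
Qed.

Lemma key_numeric (m dl L N : R) :
  1 <= m -> 0 < dl -> 1 <= L -> 0 < N ->
  N - 1 < (1 + dl) * exp 1 * (m + 1) ^ 2 * L ->
  2 * (ln (m + 1) + (m + 1) * (ln ((1 + dl) * exp 1 * (m + 1) ^ 2 + 1) - 1 - ln (dl / 2))) / ((m + 1) * dl) < L ->
  ln (m + 1) + (m + 1) * ln N - dl * (m + 1) * L < 0.
Proof.
  intros Hm Hd HL HN Hn HB. set (A := (1 + dl) * exp 1 * (m + 1) ^ 2) in *.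
  assert (HA : 0 < A). { unfold A. assert (0 < exp 1) by apply exp_pos. assert (0 < (m+1)^2) by (apply pow_lt; lra).
    apply Rmult_lt_0_compat; [apply Rmult_lt_0_compat|]; lra. }
  assert (H1 : ln N <= ln (A + 1) + ln L).
  { rewrite <- ln_mult by lra. apply ln_le'; auto. nra. }
  assert (H2 : ln L <= dl / 2 * L - 1 - ln (dl / 2)).
  { pose proof (ln_le_sub1 (dl / 2 * L) ltac:(apply Rmult_lt_0_compat; lra)).
    rewrite ln_mult in H by lra. lra. }
  set (Bc := ln (m + 1) + (m + 1) * (ln (A + 1) - 1 - ln (dl / 2))) in *.
  assert (HB' : Bc < (m + 1) * (dl / 2) * L).
  { apply (Rmult_lt_compat_l ((m + 1) * (dl / 2))) in HB. 2:{ apply Rmult_lt_0_compat; lra. }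
    replace ((m + 1) * (dl / 2) * (2 * Bc / ((m + 1) * dl))) with Bc in HB by (field; lra). lra. }
  assert ((m + 1) * ln N <= (m + 1) * (ln (A + 1) + (dl / 2 * L - 1 - ln (dl / 2)))).
  { apply Rmult_le_compat_l; lra. }
  unfold Bc in HB'. nra.
Qed.
Theorem theorem2 (M : nat) (delta : R) :
  (1 <= M)%nat -> 0 < delta ->
  exists T0 : nat, forall T n : nat, (T0 <= T)%nat ->
    is_ceil ((1 + delta) * exp 1 * ln 2 * (INR M + 1) ^ 2 * log2 (INR T)) n ->
    exists c : nat -> word, async_code n M T c.
Proof.
  intros HM Hd.
  set (m := INR M).
  assert (Hm : 1 <= m) by (apply (le_INR 1); auto).
  set (A := (1 + delta) * exp 1 * (m + 1) ^ 2).
  set (Bp := 2 * (ln (m + 1) + (m + 1) * (ln (A + 1) - 1 - ln (delta / 2))) / ((m + 1) * delta)).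
  set (y := exp (Rmax Bp 1)).
  assert (Hy : 0 < y) by apply exp_pos.
  assert (Hup : (0 <= up y)%Z). { destruct (archimed y) as [H _]. apply le_IZR. simpl. lra. }
  exists (Z.to_nat (up y)). intros T n HT [Hn1 Hn2].
  assert (HT0 : y < INR T).
  { apply Rlt_le_trans with (INR (Z.to_nat (up y))). rewrite INR_IZR_INZ, ZArith.Znat.Z2Nat.id by auto.
    destruct (archimed y); lra. apply le_INR; auto. }
  assert (HTpos : 0 < INR T) by lra.
  set (L := ln (INR T)).
  assert (HL : Rmax Bp 1 < L). { unfold L. rewrite <- (ln_exp (Rmax Bp 1)). apply ln_increasing; auto. }
  assert (HL1 : 1 < L) by (pose proof (Rmax_r Bp 1); lra).
  assert (HLB : Bp < L) by (pose proof (Rmax_l Bp 1); lra).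
  assert (Hln2 : 0 < ln 2) by (pose proof ln_lt_2; lra).
  assert (HX : (1 + delta) * exp 1 * ln 2 * (m + 1) ^ 2 * log2 (INR T) = A * L).
  { unfold log2, A, L, m. field. lra. }
  rewrite HX in Hn1, Hn2.
  assert (HA : 0 < A). { unfold A. assert (0 < exp 1) by apply exp_pos. assert (0 < (m+1)^2) by (apply pow_lt; lra).
    apply Rmult_lt_0_compat; [apply Rmult_lt_0_compat|]; lra. }
  assert (HN : 0 < INR n) by nra.
  assert (Hn : (1 <= n)%nat). { destruct n. simpl in HN; lra. lia. }
  assert (HT1 : (1 <= T)%nat). { destruct T. simpl in HTpos; lra. lia. }
  apply exists_code; auto.
  rewrite !mult_INR, pow_INR, mult_INR, S_INR. fold m.
  assert (Hr : exp (-1) / (m + 1) <= rr M) by (apply rr_lower; auto).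
  assert (Hr0 : rr M <= 1).
  { unfold rr. rewrite S_INR. fold m.
    assert (0 <= m / (m + 1) <= 1). { split. apply Rlt_le, Rdiv_lt_0_compat; lra.
      apply (Rmult_le_reg_r (m + 1)); [lra|]. unfold Rdiv; rewrite Rmult_assoc, Rinv_l by lra. lra. }
    assert ((m / (m + 1)) ^ M <= 1) by (apply (pow_le_mono_dec _ 0 M); lia || lra).
    assert (0 <= (m / (m + 1)) ^ M) by (apply pow_le; lra).
    unfold Rdiv at 1. assert ((m / (m + 1)) ^ M * / (m + 1) <= (m / (m + 1)) ^ M * 1).
    { apply Rmult_le_compat_l; [lra|]. rewrite <- Rinv_1. apply Rinv_le_contravar; lra. } lra. }
  assert (Hpow : (1 - rr M) ^ n <= exp (- (rr M * INR n))).
  { replace (- (rr M * INR n)) with (INR n * (- rr M)) by ring. rewrite <- exp_pow.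
    apply pow_incr. split. lra. pose proof (exp_ge1 (- rr M)); lra. }
  assert (Hrn : (1 + delta) * (m + 1) * L <= rr M * INR n).
  { apply Rle_trans with (exp (-1) / (m + 1) * (A * L)).
    right. unfold A. replace (exp (-1)) with (/ exp 1) by (rewrite <- exp_Ropp; f_equal; lra).
    field. split. pose proof (exp_pos 1); lra. lra.
    apply Rmult_le_compat; auto. unfold Rdiv. apply Rmult_le_pos. left; apply exp_pos. left; apply Rinv_0_lt_compat; lra. nra. }
  assert (HK := key_numeric m delta L (INR n) Hm Hd ltac:(lra) HN ltac:(fold A; lra) ltac:(fold A; fold Bp; lra)).
  set (N := INR n) in *. set (t := INR T) in *.
  assert (Ht : t = exp L) by (unfold L; rewrite exp_ln; auto).
  assert (HNe : N = exp (ln N)) by (rewrite exp_ln; auto).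
  assert (Hme : m + 1 = exp (ln (m + 1))) by (rewrite exp_ln; lra).
  assert (Hprod : t * (N * ((m + 1) * (t * N) ^ M)) = exp (ln (m + 1) + (m + 1) * (L + ln N))).
  { assert (E1 : exp (L + ln N) = t * N) by (rewrite exp_plus, <- Ht, <- HNe; auto).
    rewrite exp_plus, <- Hme.
    replace ((m + 1) * (L + ln N)) with (INR (S M) * (L + ln N)) by (rewrite S_INR; fold m; ring).
    rewrite <- exp_pow, E1, <- tech_pow_Rmult. ring. }
  rewrite Hprod.
  apply Rle_lt_trans with (exp (ln (m + 1) + (m + 1) * (L + ln N)) * exp (- (rr M * N))).
  apply Rmult_le_compat_l. left; apply exp_pos. auto.
  rewrite <- exp_plus. apply (Rlt_le_trans _ (exp 0)); [apply exp_increasing; nra | rewrite exp_0; lra].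
Qed.
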